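(* Let $\pi_0\in(0,1)$ and let $\psi:[0,1]\to\mathbb{R}$ be non-decreasing with $\psi(0)<\psi(1)$. For $\sigma\in(0,0.25]$ define $$\pi_1(1)=\frac{(1+4\sigma)\pi_0}{1+4\sigma\pi_0},\qquad \pi_1(0)=\frac{(1-4\sigma)\pi_0}{1-4\sigma\pi_0},$$ $$\Psi(\sigma,\pi_0)=(0.5+2\sigma\pi_0)\,\psi(\pi_1(1))+(0.5-2\sigma\pi_0)\,\psi(\pi_1(0)),$$ and $\Delta\Phi(\sigma,\pi_0)=2\sigma\pi_0+\Psi(\sigma,\pi_0)-\psi(\pi_0)$. If $\psi$ is linear or convex, then $\Delta\Phi(\sigma,\pi_0)$ is increasing in $\sigma$.
   Context: Interpretation: $\Delta\Phi(\sigma,\pi_0)$ is the gain in the expert's expected payoff (accuracy plus reputation $\psi$ of the posterior belief about his competence) from choosing a complex rule over a simple rule, where the complex rule yields the correct action with probability $0.5+2\sigma$ if the expert is competent and $0.5$ otherwise, the simple rule yields it with probability $0.5$ and reveals nothing, $\pi_0$ is the prior that the expert is competent, and $\pi_1(Y)$ is the posterior after the complex rule leads to the correct ($Y=1$) or incorrect ($Y=0$) action. *)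

(* Defs.v *)
From HB Require Import structures.
From mathcomp Require Import all_boot all_order all_algebra.
Set Implicit Arguments. Unset Strict Implicit. Unset Printing Implicit Defensive.
Import Order.TTheory GRing.Theory Num.Theory.
Local Open Scope ring_scope.

(* psi : [0,1] -> R is represented by a total function R -> R whose
   hypotheses are only imposed on [0,1]. *)

Definition nondecreasing01 {R : realFieldType} (psi : R -> R) : Prop :=
  forall x y : R, 0 <= x -> x <= y -> y <= 1 -> psi x <= psi y.

Definition linear01 {R : realFieldType} (psi : R -> R) : Prop :=
  exists a b : R, forall x : R, 0 <= x <= 1 -> psi x = a + b * x.

Definition convex01 {R : realFieldType} (psi : R -> R) : Prop :=
  forall x y t : R, 0 <= x <= 1 -> 0 <= y <= 1 -> 0 <= t <= 1 ->
    psi ((1 - t) * x + t * y) <= (1 - t) * psi x + t * psi y.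

(* posterior after correct (Y=1) / incorrect (Y=0) action *)
Definition pi1_1 {R : realFieldType} (sigma pi0 : R) : R :=
  (1 + 4 * sigma) * pi0 / (1 + 4 * sigma * pi0).
Definition pi1_0 {R : realFieldType} (sigma pi0 : R) : R :=
  (1 - 4 * sigma) * pi0 / (1 - 4 * sigma * pi0).

Definition Psi {R : realFieldType} (psi : R -> R) (sigma pi0 : R) : R :=
  (2^-1 + 2 * sigma * pi0) * psi (pi1_1 sigma pi0)
  + (2^-1 - 2 * sigma * pi0) * psi (pi1_0 sigma pi0).

Definition DeltaPhi {R : realFieldType} (psi : R -> R) (sigma pi0 : R) : R :=
  2 * sigma * pi0 + Psi psi sigma pi0 - psi pi0.

(* Main.v *)
Require Import Defs.
From HB Require Import structures.
From mathcomp Require Import all_boot all_order all_algebra.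
From mathcomp Require Import ring lra.
Import Order.TTheory GRing.Theory Num.Theory.
Local Open Scope ring_scope.

Lemma cvx_interp (R : realFieldType) (psi : R -> R) (a b z : R) :
  convex01 psi -> 0 <= a -> a <= z -> z <= b -> b <= 1 -> a < b ->
  (b - a) * psi z <= (b - z) * psi a + (z - a) * psi b.
Proof.
move=> c a0 az zb b1 ab.
have Dn : b - a != 0 by rewrite subr_eq0 gt_eqF.
have Dp : 0 < b - a by rewrite subr_gt0.
set t := (z - a) / (b - a).
have t0 : 0 <= t by rewrite /t; apply: divr_ge0; lra.
have t1 : t <= 1 by rewrite /t ler_pdivrMr //; lra.
have := c a b t.
have e : (1 - t) * a + t * b = z by rewrite /t; field; rewrite ?d1n ?d2n ?e1n ?e2n ?pnatr_eq0.
rewrite e => H.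
have {}H := H ltac:(apply/andP; split; lra) ltac:(apply/andP; split; lra)
  ltac:(apply/andP; split; lra).
have H2 : (b - a) * psi z <= (b - a) * ((1 - t) * psi a + t * psi b)
  by rewrite ler_pM2l.
have e2 : (b - a) * ((1 - t) * psi a + t * psi b) = (b - z) * psi a + (z - a) * psi b
  by rewrite /t; field; rewrite ?d1n ?d2n ?e1n ?e2n ?pnatr_eq0.
by rewrite -e2.
Qed.

Lemma Psi_mono (R : realFieldType) (psi : R -> R) (pi0 s1 s2 : R) :
  convex01 psi -> 0 < pi0 -> pi0 < 1 -> 0 < s1 -> s1 < s2 -> s2 <= 4^-1 ->
  Psi psi s1 pi0 <= Psi psi s2 pi0.
Proof.
move=> c p0 p1 h1 h12 h2.
have d1p : 0 < 1 + 4 * s1 * pi0 by nra.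
have d2p : 0 < 1 + 4 * s2 * pi0 by nra.
have e1p : 0 < 1 - 4 * s1 * pi0 by nra.
have e2p : 0 < 1 - 4 * s2 * pi0 by nra.
have d1n : 1 + 4 * s1 * pi0 != 0 by rewrite gt_eqF.
have d2n : 1 + 4 * s2 * pi0 != 0 by rewrite gt_eqF.
have e1n : 1 - 4 * s1 * pi0 != 0 by rewrite gt_eqF.
have e2n : 1 - 4 * s2 * pi0 != 0 by rewrite gt_eqF.
rewrite /Psi.
set q1 := pi1_1 s2 pi0; set q0 := pi1_0 s2 pi0.
set x := pi1_1 s1 pi0; set y := pi1_0 s1 pi0.
have Eq1x : q1 - x = (4 * pi0 * (1 - pi0) * (s2 - s1)) /
   ((1 + 4 * s1 * pi0) * (1 + 4 * s2 * pi0)) by rewrite /q1 /x /pi1_1; field; rewrite ?d1n ?d2n ?e1n ?e2n ?pnatr_eq0.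
have Exp : x - pi0 = (4 * s1 * pi0 * (1 - pi0)) / (1 + 4 * s1 * pi0)
  by rewrite /x /pi1_1; field; rewrite ?d1n ?d2n ?e1n ?e2n ?pnatr_eq0.
have Epy : pi0 - y = (4 * s1 * pi0 * (1 - pi0)) / (1 - 4 * s1 * pi0)
  by rewrite /y /pi1_0; field; rewrite ?d1n ?d2n ?e1n ?e2n ?pnatr_eq0.
have Eyq : y - q0 = (4 * pi0 * (1 - pi0) * (s2 - s1)) /
   ((1 - 4 * s1 * pi0) * (1 - 4 * s2 * pi0)) by rewrite /q0 /y /pi1_0; field; rewrite ?d1n ?d2n ?e1n ?e2n ?pnatr_eq0.
have Eq0 : q0 = ((1 - 4 * s2) * pi0) / (1 - 4 * s2 * pi0) by [].
have E1q : 1 - q1 = (1 - pi0) / (1 + 4 * s2 * pi0) by rewrite /q1 /pi1_1; field; rewrite ?d1n ?d2n ?e1n ?e2n ?pnatr_eq0.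
have Hq1x : 0 <= q1 - x by rewrite Eq1x; apply: divr_ge0; repeat apply: mulr_ge0; lra.
have Hxp : 0 <= x - pi0 by rewrite Exp; apply: divr_ge0; repeat apply: mulr_ge0; lra.
have Hpy : 0 <= pi0 - y by rewrite Epy; apply: divr_ge0; repeat apply: mulr_ge0; lra.
have Hyq : 0 <= y - q0 by rewrite Eyq; apply: divr_ge0; repeat apply: mulr_ge0; lra.
have Hq0 : 0 <= q0 by rewrite Eq0; apply: divr_ge0; repeat apply: mulr_ge0; lra.
have Hq1 : 0 <= 1 - q1 by rewrite E1q; apply: divr_ge0; repeat apply: mulr_ge0; lra.
have Hxy : 0 < x - y.
  have : 0 < x - pi0 by rewrite Exp; apply: divr_gt0; repeat apply: mulr_gt0; lra.
  lra.
have Dp : 0 < q1 - q0 by lra.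
have Dn : q1 - q0 != 0 by rewrite gt_eqF.
have hx := @cvx_interp _ psi _ _ _ c Hq0 (ltac:(lra) : q0 <= x) (ltac:(lra) : x <= q1) (ltac:(lra) : q1 <= 1) (ltac:(lra) : q0 < q1).
have hy := @cvx_interp _ psi _ _ _ c Hq0 (ltac:(lra) : q0 <= y) (ltac:(lra) : y <= q1) (ltac:(lra) : q1 <= 1) (ltac:(lra) : q0 < q1).
have w1 : 0 <= 2^-1 + 2 * s1 * pi0 by nra.
have w0 : 0 <= 2^-1 - 2 * s1 * pi0 by nra.
have hx' := ler_wpM2l w1 hx.
have hy' := ler_wpM2l w0 hy.
have C1 : (2^-1 + 2 * s1 * pi0) * (x - q0) + (2^-1 - 2 * s1 * pi0) * (y - q0)
   = (q1 - q0) * (2^-1 + 2 * s2 * pi0)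
  by rewrite /x /y /q0 /q1 /pi1_1 /pi1_0; field; rewrite ?d1n ?d2n ?e1n ?e2n ?pnatr_eq0.
have C0 : (2^-1 + 2 * s1 * pi0) * (q1 - x) + (2^-1 - 2 * s1 * pi0) * (q1 - y)
   = (q1 - q0) * (2^-1 - 2 * s2 * pi0)
  by rewrite /x /y /q0 /q1 /pi1_1 /pi1_0; field; rewrite ?d1n ?d2n ?e1n ?e2n ?pnatr_eq0.
rewrite -(ler_pM2l Dp).
move: hx' hy' C1 C0.
generalize (psi x) (psi y) (psi q0) (psi q1) => a b u v.
generalize (2^-1 + 2 * s1 * pi0) (2^-1 - 2 * s1 * pi0)
  (2^-1 + 2 * s2 * pi0) (2^-1 - 2 * s2 * pi0) => A B C D.
move=> h1' h2' c1 c0.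
have -> : (q1 - q0) * (A * a + B * b) = A * ((q1 - q0) * a) + B * ((q1 - q0) * b) by ring.
have -> : (q1 - q0) * (C * v + D * u) = ((q1 - q0) * C) * v + ((q1 - q0) * D) * u by ring.
rewrite -c1 -c0.
have -> : (A * (x - q0) + B * (y - q0)) * v + (A * (q1 - x) + B * (q1 - y)) * u
  = A * ((q1 - x) * u + (x - q0) * v) + B * ((q1 - y) * u + (y - q0) * v) by ring.
exact: lerD.
Qed.

Lemma convex_of_linear (R : realFieldType) (psi : R -> R) :
  linear01 psi -> convex01 psi.
Proof.
move=> [a [b H]] x y t /andP[x0 x1] /andP[y0 y1] /andP[t0 t1].
have t' : 0 <= 1 - t by lra.
have hz : 0 <= (1 - t) * x + t * y <= 1.
  apply/andP; split; first by apply: addr_ge0; apply: mulr_ge0.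
  have e1 := ler_wpM2l t' x1; have e2 := ler_wpM2l t0 y1.
  move: e1 e2; rewrite !mulr1 => e1 e2.
  lra.
rewrite H // H ?x0 ?x1 // H ?y0 ?y1 //.
have -> : a + b * ((1 - t) * x + t * y) = (1 - t) * (a + b * x) + t * (a + b * y) by ring.
by [].
Qed.

Theorem proposition2 (R : realFieldType) (psi : R -> R) (pi0 : R) :
  0 < pi0 < 1 ->
  nondecreasing01 psi ->
  psi 0 < psi 1 ->
  (linear01 psi \/ convex01 psi) ->
  forall s1 s2 : R, 0 < s1 -> s1 < s2 -> s2 <= 4^-1 ->
    DeltaPhi psi s1 pi0 < DeltaPhi psi s2 pi0.
Proof.
move=> /andP[p0 p1] _ _ hc s1 s2 h1 h12 h2.
have c : convex01 psi by case: hc => // /convex_of_linear.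
have := @Psi_mono _ psi pi0 s1 s2 c p0 p1 h1 h12 h2.
rewrite /DeltaPhi.
have : 2 * s1 * pi0 < 2 * s2 * pi0.
  by rewrite -!mulrA ltr_pM2l // ltr_pM2r.
generalize (Psi psi s1 pi0) (Psi psi s2 pi0) (psi pi0) (2 * s1 * pi0) (2 * s2 * pi0).
move=> a b u v w ha hb; lra.
Qed.
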